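(* Under the setting below, suppose that for some $\tau_c\in(0,\bar\tau)$ the equation $\Delta(\lambda,\tau_c):=\lambda+A(\tau_c)-B(\tau_c)e^{-\lambda\tau_c}=0$ has a pair of purely imaginary roots $\pm i\omega(\tau_c)$ with $\omega(\tau_c)>0$. Then $\pm i\omega(\tau_c)$ are simple roots, so there is a $C^1$ branch of roots $\lambda(\tau)$ near $\tau_c$ with $\lambda(\tau_c)=i\omega(\tau_c)$, and $$\mathrm{sign}\left\{\frac{d\,\mathrm{Re}\,\lambda}{d\tau}\Big|_{\tau=\tau_c}\right\}=\mathrm{sign}\Big\{-B^3-B^2B'\tau_c+B\,(A^2+A'+AA'\tau_c)-B'A\Big\},$$ where $A=A(\tau_c)$, $B=B(\tau_c)$, $A'=A'(\tau_c)$, $B'=B'(\tau_c)$.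
   Context: Let $\delta>0$ and $\beta:[0,+\infty)\to(0,+\infty)$ twice continuously differentiable, strictly decreasing, with $\beta'(s)<0$ for $s>0$, $\lim_{S\to+\infty}\beta(S)=0$, and $\delta<\beta(0)$. Let $\bar\tau:=\frac1\delta\ln\!\big(\frac{2\beta(0)}{\delta+\beta(0)}\big)$, $\beta^{-1}$ the inverse of $\beta$ on $(0,\beta(0)]$, and for $\tau\in[0,\bar\tau)$: $S^*(\tau)=\beta^{-1}\!\big(\frac{\delta}{2e^{-\delta\tau}-1}\big)$, $N^*(\tau)=(2e^{-\delta\tau}-1)e^{\delta\tau}S^*(\tau)$, $A(\tau)=\delta+\beta(S^*(\tau))$, $B(\tau)=[2\beta(S^*(\tau))+N^*(\tau)\beta'(S^*(\tau))]e^{-\delta\tau}$; these are continuously differentiable in $\tau$, and $A'$, $B'$ denote their derivatives. *)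

(* Defs.v *)
(* real analysis with Stdlib Reals.  Complex numbers are
   represented by their real and imaginary parts. *)
From Stdlib Require Import Reals.
Open Scope R_scope.

Definition sgn (x : R) : R :=
  if Rlt_dec 0 x then 1 else if Rlt_dec x 0 then -1 else 0.

Definition taubar (delta : R) (beta : R -> R) : R :=
  / delta * ln (2 * beta 0 / (delta + beta 0)).

Definition Sstar (delta : R) (binv : R -> R) (tau : R) : R :=
  binv (delta / (2 * exp (- delta * tau) - 1)).

Definition Nstar (delta : R) (binv : R -> R) (tau : R) : R :=
  (2 * exp (- delta * tau) - 1) * exp (delta * tau) * Sstar delta binv tau.

Definition Afun (delta : R) (beta binv : R -> R) (tau : R) : R :=
  delta + beta (Sstar delta binv tau).

(* B(tau) = [2 beta(Sstar) + Nstar beta1(Sstar)] e^{-delta tau};  beta1 = beta' *)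
Definition Bfun (delta : R) (beta beta1 binv : R -> R) (tau : R) : R :=
  (2 * beta (Sstar delta binv tau)
   + Nstar delta binv tau * beta1 (Sstar delta binv tau)) * exp (- delta * tau).

(* Delta(lambda, tau) = lambda + a - b e^{-lambda tau}, lambda = x + i y,
   with a = A(tau), b = B(tau).
   e^{-lambda tau} = e^{-x tau} (cos (y tau) - i sin (y tau)). *)
Definition DeltaRe (a b tau x y : R) : R :=
  x + a - b * exp (- x * tau) * cos (y * tau).
Definition DeltaIm (a b tau x y : R) : R :=
  y + b * exp (- x * tau) * sin (y * tau).

(* d Delta / d lambda = 1 + b tau e^{-lambda tau} (real and imaginary parts) *)
Definition dDeltaRe (b tau x y : R) : R :=
  1 + b * tau * exp (- x * tau) * cos (y * tau).
Definition dDeltaIm (b tau x y : R) : R :=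
  - (b * tau * exp (- x * tau) * sin (y * tau)).

Definition is_root (a b tau x y : R) : Prop :=
  DeltaRe a b tau x y = 0 /\ DeltaIm a b tau x y = 0.

Definition is_simple_root (a b tau x y : R) : Prop :=
  is_root a b tau x y /\
  (dDeltaRe b tau x y <> 0 \/ dDeltaIm b tau x y <> 0).

(* Main.v *)
Require Import Defs.
From Stdlib Require Import Reals Lra Lia Psatz Classical ClassicalEpsilon Ranalysis5.
Open Scope R_scope.

Lemma cont_iff (f : R -> R) (x : R) :
  continuity_pt f x <->
  (forall eps, 0 < eps -> exists d, 0 < d /\ forall y, Rabs (y - x) < d -> Rabs (f y - f x) < eps).
Proof.
  unfold continuity_pt, continue_in, limit1_in, limit_in, D_x, no_cond; simpl; unfold Rdist.
  split.
  - intros H eps He. destruct (H eps He) as [d [Hd Hy]]. exists d; split; [lra|].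
    intros y Hyd. destruct (Req_dec x y) as [<-|Hne].
    + rewrite Rminus_diag, Rabs_R0; lra.
    + apply Hy; split; [split; auto|exact Hyd].
  - intros H eps He. destruct (H eps He) as [d [Hd Hy]]. exists d; split; [lra|].
    intros y [_ Hyd]. apply Hy; exact Hyd.
Qed.

Lemma dpl_cont f x l : derivable_pt_lim f x l -> continuity_pt f x.
Proof. intro H. apply derivable_continuous_pt. exists l. exact H. Qed.

Lemma dpl_plus f g x a b : derivable_pt_lim f x a -> derivable_pt_lim g x b ->
  derivable_pt_lim (fun t => f t + g t) x (a + b).
Proof. intros; exact (derivable_pt_lim_plus f g x a b H H0). Qed.
Lemma dpl_minus f g x a b : derivable_pt_lim f x a -> derivable_pt_lim g x b ->
  derivable_pt_lim (fun t => f t - g t) x (a - b).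
Proof. intros; exact (derivable_pt_lim_minus f g x a b H H0). Qed.
Lemma dpl_mult f g x a b : derivable_pt_lim f x a -> derivable_pt_lim g x b ->
  derivable_pt_lim (fun t => f t * g t) x (a * g x + f x * b).
Proof. intros; exact (derivable_pt_lim_mult f g x a b H H0). Qed.
Lemma dpl_comp f g x a b : derivable_pt_lim f x a -> derivable_pt_lim g (f x) b ->
  derivable_pt_lim (fun t => g (f t)) x (b * a).
Proof. intros; exact (derivable_pt_lim_comp f g x a b H H0). Qed.
Lemma dpl_const c x : derivable_pt_lim (fun _ => c) x 0.
Proof. exact (derivable_pt_lim_const c x). Qed.
Lemma dpl_id x : derivable_pt_lim (fun t => t) x 1.
Proof. exact (derivable_pt_lim_id x). Qed.
Lemma dpl_inv f x a : derivable_pt_lim f x a -> f x <> 0 ->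
  derivable_pt_lim (fun t => / f t) x (- a / (f x * f x)).
Proof.
  intros H Hf.
  assert (H1 := derivable_pt_lim_div (fun _ => 1) f x 0 a (dpl_const 1 x) H Hf).
  unfold Rsqr in H1.
  replace (- a / (f x * f x)) with ((0 * f x - a * 1) / (f x * f x)) by (field; auto).
  intros eps He; destruct (H1 eps He) as [d Hd]; exists d; intros h Hh Hhd.
  specialize (Hd h Hh Hhd). unfold div_fct in Hd.
  replace (/ f (x + h) - / f x) with (1 / f (x+h) - 1 / f x) by (unfold Rdiv; ring). exact Hd.
Qed.
Lemma dpl_exp f x a : derivable_pt_lim f x a ->
  derivable_pt_lim (fun t => exp (f t)) x (exp (f x) * a).
Proof. intro H. apply (dpl_comp f exp x a (exp (f x)) H (derivable_pt_lim_exp _)). Qed.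
Lemma dpl_sin f x a : derivable_pt_lim f x a ->
  derivable_pt_lim (fun t => sin (f t)) x (cos (f x) * a).
Proof. intro H. apply (dpl_comp f sin x a _ H (derivable_pt_lim_sin _)). Qed.
Lemma dpl_cos f x a : derivable_pt_lim f x a ->
  derivable_pt_lim (fun t => cos (f t)) x (- sin (f x) * a).
Proof. intro H. apply (dpl_comp f cos x a _ H (derivable_pt_lim_cos _)). Qed.
Lemma dpl_ext f g x l : derivable_pt_lim f x l -> (forall t, f t = g t) -> derivable_pt_lim g x l.
Proof. intros H E eps He; destruct (H eps He) as [d Hd]; exists d; intros h H1 H2.
  rewrite <- !E; auto. Qed.
Lemma dpl_eql f x l1 l2 : derivable_pt_lim f x l1 -> l1 = l2 -> derivable_pt_lim f x l2.
Proof. intros H <-; exact H. Qed.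

Lemma dpl_local f g x l d : 0 < d -> (forall t, Rabs (t - x) < d -> f t = g t) ->
  derivable_pt_lim f x l -> derivable_pt_lim g x l.
Proof.
  intros Hd E H eps He. destruct (H eps He) as [d1 Hd1].
  assert (Hm : 0 < Rmin d1 d) by (apply Rmin_pos; [apply cond_pos|lra]).
  exists (mkposreal _ Hm). simpl. intros h Hh Hhd.
  rewrite <- (E x), <- (E (x+h)).
  - apply Hd1; auto. apply Rlt_le_trans with (1 := Hhd); apply Rmin_l.
  - replace (x + h - x) with h by ring. apply Rlt_le_trans with (1 := Hhd); apply Rmin_r.
  - rewrite Rminus_diag, Rabs_R0; lra.
Qed.

Lemma dpl_zero_local f x l d : 0 < d -> (forall t, Rabs (t - x) < d -> f t = 0) ->
  derivable_pt_lim f x l -> l = 0.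
Proof.
  intros Hd E H. apply (uniqueness_limite (fun _ => 0) x l 0).
  - apply (dpl_local f _ x l d Hd E H).
  - apply dpl_const.
Qed.

Definition C1on (f f' : R -> R) (D : R -> Prop) :=
  forall t, D t -> derivable_pt_lim f t (f' t) /\ continuity_pt f' t.

Lemma C1_sub f f' D D' : C1on f f' D -> (forall t, D' t -> D t) -> C1on f f' D'.
Proof. intros H S t Ht; apply H, S, Ht. Qed.
Lemma C1_const c D : C1on (fun _ => c) (fun _ => 0) D.
Proof. intros t _; split; [apply dpl_const| apply continuity_pt_const; intros a b; reflexivity]. Qed.
Lemma C1_id D : C1on (fun t => t) (fun _ => 1) D.
Proof. intros t _; split; [apply dpl_id| apply continuity_pt_const; intros a b; reflexivity]. Qed.
Lemma C1_plus f f' g g' D : C1on f f' D -> C1on g g' D ->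
  C1on (fun t => f t + g t) (fun t => f' t + g' t) D.
Proof. intros Hf Hg t Ht; destruct (Hf t Ht), (Hg t Ht); split.
  - apply dpl_plus; auto.
  - exact (continuity_pt_plus f' g' t H0 H2). Qed.
Lemma C1_minus f f' g g' D : C1on f f' D -> C1on g g' D ->
  C1on (fun t => f t - g t) (fun t => f' t - g' t) D.
Proof. intros Hf Hg t Ht; destruct (Hf t Ht), (Hg t Ht); split.
  - apply dpl_minus; auto.
  - exact (continuity_pt_minus f' g' t H0 H2). Qed.
Lemma C1_mult f f' g g' D : C1on f f' D -> C1on g g' D ->
  C1on (fun t => f t * g t) (fun t => f' t * g t + f t * g' t) D.
Proof. intros Hf Hg t Ht; destruct (Hf t Ht), (Hg t Ht); split.
  - apply dpl_mult; auto.
  - apply dpl_cont in H, H1.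
    exact (continuity_pt_plus _ _ t (continuity_pt_mult f' g t H0 H1) (continuity_pt_mult f g' t H H2)). Qed.
Lemma C1_comp f f' g g' D1 D2 : C1on f f' D1 -> C1on g g' D2 -> (forall t, D1 t -> D2 (f t)) ->
  C1on (fun t => g (f t)) (fun t => g' (f t) * f' t) D1.
Proof. intros Hf Hg M t Ht; destruct (Hf t Ht), (Hg (f t) (M t Ht)); split.
  - apply dpl_comp; auto.
  - apply dpl_cont in H.
    exact (continuity_pt_mult _ f' t (continuity_pt_comp f g' t H H2) H0). Qed.
Lemma C1_inv f f' D : C1on f f' D -> (forall t, D t -> f t <> 0) ->
  C1on (fun t => / f t) (fun t => - f' t / (f t * f t)) D.
Proof. intros Hf N t Ht; destruct (Hf t Ht); split.
  - apply dpl_inv; auto.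
  - apply dpl_cont in H. unfold Rdiv.
    apply (continuity_pt_mult (fun t => - f' t) (fun t => / (f t * f t))).
    + exact (continuity_pt_opp _ t H0).
    + apply (continuity_pt_inv (fun t => f t * f t)).
      * exact (continuity_pt_mult f f t H H).
      * specialize (N t Ht); apply Rmult_integral_contrapositive; auto. Qed.
Lemma C1_exp D : C1on exp exp D.
Proof. intros t _; split; [apply derivable_pt_lim_exp|].
  apply dpl_cont with (l := exp t); apply derivable_pt_lim_exp. Qed.
Lemma C1_sin D : C1on sin cos D.
Proof. intros t _; split; [apply derivable_pt_lim_sin|].
  apply dpl_cont with (l := - sin t); apply derivable_pt_lim_cos. Qed.
Lemma C1_cos D : C1on cos (fun t => - sin t) D.
Proof. intros t _; split; [apply derivable_pt_lim_cos|].
  apply (continuity_pt_opp sin). apply dpl_cont with (l := cos t); apply derivable_pt_lim_sin. Qed.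

Lemma strict_dec f f' lb ub :
  (forall x, lb <= x <= ub -> derivable_pt_lim f x (f' x) /\ f' x < 0) ->
  forall x y, lb <= x -> x < y -> y <= ub -> f y < f x.
Proof.
  intros H x y H1 H2 H3.
  destruct (MVT_cor2 f f' x y H2) as [c [Hc1 Hc2]].
  - intros c Hc; apply H; lra.
  - assert (f' c < 0) by (apply H; lra). nra.
Qed.

Lemma inv_cont f g lb ub y :
  (forall x y, lb <= x -> x < y -> y <= ub -> f y < f x) ->
  (forall y, f ub <= y <= f lb -> lb <= g y <= ub /\ f (g y) = y) ->
  f ub < y < f lb -> continuity_pt g y.
Proof.
  intros Hd Hg Hy.
  assert (Hle : forall x y, lb <= x -> x <= y -> y <= ub -> f y <= f x).
  { intros x1 y1 a b c. destruct (Req_dec x1 y1) as [<-|]; [lra|]. left; apply Hd; lra. }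
  destruct (Hg y ltac:(lra)) as [[Hg1 Hg2] Hfy].
  assert (lb < g y < ub).
  { split.
    - destruct (Req_dec (g y) lb) as [E|E]; [rewrite E in Hfy; lra| lra].
    - destruct (Req_dec (g y) ub) as [E|E]; [rewrite E in Hfy; lra| lra]. }
  apply cont_iff. intros eps He.
  set (e := Rmin (eps/2) (Rmin (g y - lb) (ub - g y))).
  assert (He1 : 0 < e) by (unfold e; repeat apply Rmin_pos; lra).
  assert (He2 : e <= eps/2) by apply Rmin_l.
  assert (He3 : e <= g y - lb) by (unfold e; eapply Rle_trans; [apply Rmin_r|apply Rmin_l]).
  assert (He4 : e <= ub - g y) by (unfold e; eapply Rle_trans; [apply Rmin_r|apply Rmin_r]).
  set (a := g y - e). set (b := g y + e).
  assert (Hfa : y < f a) by (rewrite <- Hfy; apply Hd; unfold a; lra).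
  assert (Hfb : f b < y) by (rewrite <- Hfy; apply Hd; unfold b; lra).
  assert (Hub : f ub <= f b) by (apply Hle; unfold b; lra).
  assert (Hlb : f a <= f lb) by (apply Hle; unfold a; lra).
  exists (Rmin (y - f b) (f a - y)). split; [apply Rmin_pos; lra|].
  intros z Hz.
  assert (Hz3 : Rabs (z - y) < f a - y) by (eapply Rlt_le_trans; [exact Hz| apply Rmin_r]).
  assert (Hz4 : Rabs (z - y) < y - f b) by (eapply Rlt_le_trans; [exact Hz| apply Rmin_l]).
  apply Rabs_def2 in Hz3. apply Rabs_def2 in Hz4.
  destruct (Hg z ltac:(lra)) as [[Hz5 Hz6] Hfz].
  assert (a < g z).
  { destruct (Rlt_or_le a (g z)); auto. assert (f a <= f (g z)) by (apply Hle; unfold a in *; lra). lra. }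
  assert (g z < b).
  { destruct (Rlt_or_le (g z) b); auto. assert (f (g z) <= f b) by (apply Hle; unfold b in *; lra). lra. }
  apply Rabs_def1; unfold a, b in *; lra.
Qed.

Lemma inv_deriv f g y0 d l :
  0 < d -> (forall y, Rabs (y - y0) < d -> f (g y) = y) ->
  continuity_pt g y0 -> derivable_pt_lim f (g y0) l -> l <> 0 ->
  derivable_pt_lim g y0 (/ l).
Proof.
  intros Hd Hfg Hc Hf Hl eps He.
  assert (Hal : 0 < Rabs l) by (apply Rabs_pos_lt; auto).
  set (eta := Rmin (Rabs l / 2) (eps * Rabs l * Rabs l / 2)).
  assert (0 < eps * Rabs l * Rabs l) by (apply Rmult_lt_0_compat; [apply Rmult_lt_0_compat|]; lra).
  assert (Heta : 0 < eta) by (unfold eta; apply Rmin_pos; lra).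
  assert (Heta1 : eta <= Rabs l / 2) by apply Rmin_l.
  assert (Heta2 : eta <= eps * Rabs l * Rabs l / 2) by apply Rmin_r.
  destruct (Hf eta Heta) as [d1 Hd1].
  destruct (proj1 (cont_iff g y0) Hc d1 (cond_pos d1)) as [d2 [Hd2 Hg2]].
  assert (Hm : 0 < Rmin d d2) by (apply Rmin_pos; lra).
  exists (mkposreal _ Hm); simpl. intros h Hh Hhd.
  assert (Hhd1 : Rabs h < d) by (eapply Rlt_le_trans; [exact Hhd|apply Rmin_l]).
  assert (Hhd2 : Rabs h < d2) by (eapply Rlt_le_trans; [exact Hhd|apply Rmin_r]).
  set (k := g (y0 + h) - g y0).
  assert (E1 : f (g (y0 + h)) = y0 + h) by (apply Hfg; replace (y0 + h - y0) with h by ring; auto).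
  assert (E0 : f (g y0) = y0) by (apply Hfg; rewrite Rminus_diag, Rabs_R0; lra).
  assert (Hk : k <> 0).
  { intro Hk0. unfold k in Hk0. assert (Hgg : g (y0 + h) = g y0) by lra.
    rewrite Hgg in E1. lra. }
  assert (Hkd : Rabs k < d1) by (apply Hg2; replace (y0 + h - y0) with h by ring; auto).
  specialize (Hd1 k Hk Hkd).
  replace (g y0 + k) with (g (y0 + h)) in Hd1 by (unfold k; ring).
  rewrite E1, E0 in Hd1. replace (y0 + h - y0) with h in Hd1 by ring.
  set (Q := h / k) in *.
  assert (HQ : Q <> 0) by (unfold Q; apply Rmult_integral_contrapositive; split; auto; apply Rinv_neq_0_compat; auto).
  replace (k / h - / l) with ((l - Q) / (Q * l)).
  2:{ unfold Q. field. auto. }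
  unfold Rdiv. rewrite Rabs_mult, Rabs_inv, Rabs_mult.
  assert (Htri : Rabs l <= Rabs Q + Rabs (l - Q)).
  { replace l with (Q + (l - Q)) at 1 by ring. apply Rabs_triang. }
  rewrite <- Rabs_Ropp in Hd1. replace (- (Q - l)) with (l - Q) in Hd1 by ring.
  assert (HaQ : 0 < Rabs Q) by (apply Rabs_pos_lt; auto).
  apply (Rmult_lt_reg_r (Rabs Q * Rabs l)); [nra|].
  rewrite Rmult_assoc, Rinv_l; [|nra]. nra.
Qed.

Lemma inv_C1 f f' g lb ub : lb < ub ->
  (forall x, lb <= x <= ub -> derivable_pt_lim f x (f' x) /\ continuity_pt f' x /\ f' x < 0) ->
  (forall y, f ub <= y <= f lb -> lb <= g y <= ub /\ f (g y) = y) ->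
  C1on g (fun y => / f' (g y)) (fun y => f ub < y < f lb).
Proof.
  intros Hlu Hf Hg y Hy.
  assert (Hd : forall x y, lb <= x -> x < y -> y <= ub -> f y < f x).
  { apply (strict_dec f f'). intros x Hx; destruct (Hf x Hx) as [? [? ?]]; auto. }
  assert (Hc : continuity_pt g y) by (apply (inv_cont f g lb ub); auto).
  destruct (Hg y ltac:(lra)) as [Hgy _].
  destruct (Hf (g y) Hgy) as [H1 [H2 H3]].
  split.
  - apply (inv_deriv f g y (Rmin (y - f ub) (f lb - y))); auto.
    + apply Rmin_pos; lra.
    + intros z Hz.
      assert (Hz3 : Rabs (z - y) < f lb - y) by (eapply Rlt_le_trans; [exact Hz| apply Rmin_r]).
      assert (Hz4 : Rabs (z - y) < y - f ub) by (eapply Rlt_le_trans; [exact Hz| apply Rmin_l]).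
      apply Rabs_def2 in Hz3. apply Rabs_def2 in Hz4. apply Hg; lra.
    + lra.
  - apply (continuity_pt_inv (fun y => f' (g y))); [|lra].
    exact (continuity_pt_comp g f' y Hc H2).
Qed.

Lemma inv_exists f lb ub : lb < ub ->
  (forall x, lb <= x <= ub -> continuity_pt f x) ->
  exists g, forall y, f ub <= y <= f lb -> lb <= g y <= ub /\ f (g y) = y.
Proof.
  intros Hlu Hc.
  exists (fun y => epsilon (inhabits 0) (fun x => lb <= x <= ub /\ f x = y)).
  intros y Hy. apply epsilon_spec.
  destruct (f_interv_is_interv (fun x => - f x) lb ub (- y) Hlu ltac:(lra)) as [x [Hx1 Hx2]].
  - intros x Hx. exact (continuity_pt_opp f x (Hc x Hx)).
  - exists x; split; auto; lra.
Qed.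

Lemma sgn_pos_mult x m F : 0 < m -> x * m = F -> sgn x = sgn F.
Proof.
  intros Hm <-. unfold sgn.
  destruct (Rlt_dec 0 x); destruct (Rlt_dec 0 (x*m)); try reflexivity.
  - exfalso; apply n; nra.
  - exfalso; nra.
  - destruct (Rlt_dec x 0); destruct (Rlt_dec (x*m) 0); try reflexivity; exfalso; nra.
Qed.

Lemma sq_pos x y : 0 < y -> 0 < x * x + y.
Proof. intros; nra. Qed.

Lemma sign_part (A B : R -> R) tc om Ad Bd eps lr li dr di :
  0 < tc -> 0 < om -> B tc < 0 ->
  derivable_pt_lim A tc Ad -> derivable_pt_lim B tc Bd ->
  0 < eps -> lr tc = 0 -> li tc = om ->
  (forall t, Rabs (t - tc) < eps -> is_root (A t) (B t) t (lr t) (li t)) ->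
  derivable_pt_lim lr tc dr -> derivable_pt_lim li tc di ->
  let a := A tc in let b := B tc in
  sgn dr = sgn (- b ^ 3 - b ^ 2 * Bd * tc + b * (a ^ 2 + Ad + a * Ad * tc) - Bd * a).
Proof.
  intros Htc Hom Hb HA HB Heps Hlr Hli Hroot Hdr Hdi a b.
  change (B tc) with b in Hb.
  destruct (Hroot tc ltac:(rewrite Rminus_diag, Rabs_R0; lra)) as [R1 R2].
  unfold DeltaRe, DeltaIm in R1, R2. rewrite Hlr, Hli in R1, R2.
  replace (- 0 * tc) with 0 in R1, R2 by ring. rewrite exp_0 in R1, R2.
  set (C := cos (om * tc)) in *. set (S := sin (om * tc)) in *.
  assert (E1 : dr + Ad - (Bd * C + b * (- dr * tc) * C + b * (- S * (di * tc + om))) = 0).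
  { apply (dpl_zero_local (fun t => DeltaRe (A t) (B t) t (lr t) (li t)) tc _ eps Heps).
    - intros t Ht; apply Hroot; auto.
    - unfold DeltaRe.
      eapply dpl_eql.
      + apply dpl_minus; [apply dpl_plus; [exact Hdr| exact HA]|].
        apply dpl_mult; [apply dpl_mult; [exact HB|]|].
        * apply dpl_exp. apply dpl_mult; [apply (dpl_ext (fun t => - lr t)); [apply derivable_pt_lim_opp; exact Hdr| reflexivity] |apply dpl_id].
        * apply dpl_cos. apply dpl_mult; [exact Hdi| apply dpl_id].
      + cbv beta. rewrite Hlr, Hli. fold a b C S. replace (- 0 * tc) with 0 by ring. rewrite exp_0. ring. }
  assert (E2 : di + (Bd * S + b * (- dr * tc) * S + b * (C * (di * tc + om))) = 0).
  { apply (dpl_zero_local (fun t => DeltaIm (A t) (B t) t (lr t) (li t)) tc _ eps Heps).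
    - intros t Ht; apply Hroot; auto.
    - unfold DeltaIm.
      eapply dpl_eql.
      + apply dpl_plus; [exact Hdi|].
        apply dpl_mult; [apply dpl_mult; [exact HB|]|].
        * apply dpl_exp. apply dpl_mult; [apply (dpl_ext (fun t => - lr t)); [apply derivable_pt_lim_opp; exact Hdr| reflexivity] |apply dpl_id].
        * apply dpl_sin. apply dpl_mult; [exact Hdi| apply dpl_id].
      + cbv beta. rewrite Hlr, Hli. fold a b C S. replace (- 0 * tc) with 0 by ring. rewrite exp_0. ring. }
  change (A tc) with a in R1, R2. change (B tc) with b in R1, R2.
  assert (HC : b * C = a) by lra. assert (HS : b * S = - om) by lra.
  assert (HCS : C * C + S * S = 1) by (unfold C, S; rewrite <- (sin2_cos2 (om * tc)); unfold Rsqr; ring).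
  assert (Hab : a * a + om * om = b * b).
  { assert (Hq : b*C*(b*C) + b*S*(b*S) = b*b) by (replace (b*b) with (b*b*(C*C+S*S)) by (rewrite HCS; ring); ring).
    rewrite HC, HS in Hq. nra. }
  assert (E1' : dr * (1 + a * tc) - om * tc * di = om * om + Bd * C - Ad).
  { replace (b * (- dr * tc) * C) with (- dr * tc * (b * C)) in E1 by ring.
    replace (b * (- S * (di * tc + om))) with (- (b * S) * (di * tc + om)) in E1 by ring.
    rewrite HC, HS in E1. nra. }
  assert (E2' : om * tc * dr + (1 + a * tc) * di = - Bd * S - a * om).
  { replace (b * (- dr * tc) * S) with (- dr * tc * (b * S)) in E2 by ring.
    replace (b * (C * (di * tc + om))) with ((b * C) * (di * tc + om)) in E2 by ring.
    rewrite HC, HS in E2. nra. }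
  clearbody a b.
  set (K := (1 + a * tc) * (1 + a * tc) + om * tc * (om * tc)).
  assert (HK : dr * K = (1 + a * tc) * (om * om + Bd * C - Ad) + om * tc * (- Bd * S - a * om)).
  { unfold K. rewrite <- E1', <- E2'. ring. }
  apply (sgn_pos_mult dr (K * - b)).
  - unfold K. apply Rmult_lt_0_compat; [|lra].
    assert (Hot : 0 < om * tc) by (apply Rmult_lt_0_compat; lra).
    apply sq_pos. apply Rmult_lt_0_compat; lra.
  - replace (dr * (K * - b)) with (dr * K * - b) by ring. rewrite HK.
    replace ((1 + a * tc) * (om * om + Bd * C - Ad) + om * tc * (- Bd * S - a * om))
      with ((1 + a * tc) * (om * om - Ad) + Bd * ((1 + a*tc) * C - om * tc * S) - a * om * om * tc) by ring.
    assert (HCb : C = a / b) by (unfold Rdiv; rewrite <- HC; field; lra).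
    assert (HSb : S = - om / b) by (unfold Rdiv; rewrite <- HS; field; lra).
    rewrite HCb, HSb.
    replace (((1 + a * tc) * (om * om - Ad) + Bd * ((1 + a * tc) * (a / b) - om * tc * (- om / b)) - a * om * om * tc) * - b)
      with (-(1+a*tc)*(om*om - Ad)*b - Bd*((1+a*tc)*a + (om*om)*tc) + a*(om*om)*tc*b) by (field; lra).
    replace (om * om) with (b * b - a * a) by lra. ring.
Qed.

Definition C1e (f : R -> R) (D : R -> Prop) := exists f', C1on f f' D.

Lemma C1_opp f f' D : C1on f f' D -> C1on (fun t => - f t) (fun t => - f' t) D.
Proof. intros Hf t Ht; destruct (Hf t Ht); split.
  - apply (dpl_ext (opp_fct f)); [apply derivable_pt_lim_opp; auto| reflexivity].
  - exact (continuity_pt_opp f' t H0). Qed.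

Lemma E_sub f D D' : C1e f D -> (forall t, D' t -> D t) -> C1e f D'.
Proof. intros [f' H] S; exists f'; eapply C1_sub; eauto. Qed.
Lemma E_const c D : C1e (fun _ => c) D.
Proof. eexists; apply C1_const. Qed.
Lemma E_id D : C1e (fun t => t) D.
Proof. eexists; apply C1_id. Qed.
Lemma E_plus f g D : C1e f D -> C1e g D -> C1e (fun t => f t + g t) D.
Proof. intros [f' Hf] [g' Hg]; eexists; apply C1_plus; eauto. Qed.
Lemma E_minus f g D : C1e f D -> C1e g D -> C1e (fun t => f t - g t) D.
Proof. intros [f' Hf] [g' Hg]; eexists; apply C1_minus; eauto. Qed.
Lemma E_mult f g D : C1e f D -> C1e g D -> C1e (fun t => f t * g t) D.
Proof. intros [f' Hf] [g' Hg]; eexists; apply C1_mult; eauto. Qed.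
Lemma E_opp f D : C1e f D -> C1e (fun t => - f t) D.
Proof. intros [f' Hf]; eexists; apply C1_opp; eauto. Qed.
Lemma E_comp f g D1 D2 : C1e f D1 -> C1e g D2 -> (forall t, D1 t -> D2 (f t)) -> C1e (fun t => g (f t)) D1.
Proof. intros [f' Hf] [g' Hg] M; eexists; eapply C1_comp; eauto. Qed.
Lemma E_inv f D : C1e f D -> (forall t, D t -> f t <> 0) -> C1e (fun t => / f t) D.
Proof. intros [f' Hf] N; eexists; apply C1_inv; eauto. Qed.
Lemma E_div f g D : C1e f D -> C1e g D -> (forall t, D t -> g t <> 0) -> C1e (fun t => f t / g t) D.
Proof. intros Hf Hg N. unfold Rdiv. apply (E_mult f (fun t => / g t)); auto. apply E_inv; auto. Qed.
Lemma E_exp f D : C1e f D -> C1e (fun t => exp (f t)) D.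
Proof. intros Hf. apply (E_comp f exp D (fun _ => True)); auto. eexists; apply C1_exp. Qed.
Lemma E_sin f D : C1e f D -> C1e (fun t => sin (f t)) D.
Proof. intros Hf. apply (E_comp f sin D (fun _ => True)); auto. eexists; apply C1_sin. Qed.
Lemma E_cos f D : C1e f D -> C1e (fun t => cos (f t)) D.
Proof. intros Hf. apply (E_comp f cos D (fun _ => True)); auto. eexists; apply C1_cos. Qed.
Lemma E_cont f D t : C1e f D -> D t -> continuity_pt f t.
Proof. intros [f' Hf] Ht. apply (dpl_cont f t (f' t)), Hf, Ht. Qed.

Definition pf (q : R) := - q * cos q / sin q.
Definition gf (q : R) := - q * exp (pf q) / sin q.
Definition gd (q : R) := - exp (pf q) * ((sin q - q * cos q) * (sin q - q * cos q) + q * q * (sin q * sin q)) / (sin q * sin q * sin q).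

Lemma gf_C1 : exists gf', C1on gf gf' (fun q => sin q <> 0) /\ forall q, sin q <> 0 -> gf' q = gd q.
Proof.
  eexists. split.
  - unfold gf, pf, Rdiv.
    apply C1_mult.
    + apply C1_mult.
      * apply C1_opp, C1_id.
      * eapply (C1_comp (fun t => - t * cos t * / sin t) _ exp exp _ (fun _ => True)); [| apply C1_exp| auto].
        apply C1_mult; [apply C1_mult; [apply C1_opp, C1_id| apply C1_cos]|].
        apply (C1_inv sin cos); [apply C1_sin| auto].
    + apply (C1_inv sin cos); [apply C1_sin| auto].
  - intros q Hq. cbv beta. unfold gd, pf, Rdiv. field. auto.
Qed.

Lemma sq_pos0 x y : 0 < y -> 0 < x * x + y.
Proof. intros; nra. Qed.

Lemma gd_neg q : 0 < q -> 0 < sin q -> gd q < 0.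
Proof.
  intros Hq Hs. unfold gd, Rdiv.
  assert (0 < exp (pf q)) by apply exp_pos.
  assert (0 < q * q * (sin q * sin q)) by (apply Rmult_lt_0_compat; apply Rmult_lt_0_compat; lra).
  assert (0 < sin q * sin q * sin q) by (repeat apply Rmult_lt_0_compat; lra).
  assert (0 < / (sin q * sin q * sin q)) by (apply Rinv_0_lt_compat; lra).
  set (N := (sin q - q * cos q) * (sin q - q * cos q) + q * q * (sin q * sin q)).
  assert (0 < N) by (unfold N; apply sq_pos0; lra).
  set (E := exp (pf q)) in *. set (I := / (sin q * sin q * sin q)) in *.
  assert (0 < E * N * I) by (repeat apply Rmult_lt_0_compat; lra).
  replace (- E * N * I) with (- (E * N * I)) by ring. lra.
Qed.

Lemma frac_lt a b c d : 0 < b -> 0 < d -> a * d < c * b -> a / b < c / d.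
Proof.
  intros Hb Hd H. apply Rminus_gt_0_lt.
  replace (c / d - a / b) with ((c * b - a * d) / (b * d)) by (field; lra).
  apply Rdiv_lt_0_compat; [lra| apply Rmult_lt_0_compat; lra].
Qed.

Lemma xbound delta (beta : R -> R) t : 0 < delta -> delta < beta 0 -> t < taubar delta beta ->
  1 + delta / beta 0 < 2 * exp (- delta * t).
Proof.
  intros Hd Hb Ht. unfold taubar in Ht.
  set (L := ln (2 * beta 0 / (delta + beta 0))) in *.
  assert (H1 : delta * t < L).
  { replace L with (delta * (/ delta * L)) by (field; lra). apply Rmult_lt_compat_l; lra. }
  assert (H2 : exp (delta * t) < 2 * beta 0 / (delta + beta 0)).
  { rewrite <- (exp_ln (2 * beta 0 / (delta + beta 0))).
    - apply exp_increasing; exact H1.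
    - apply Rdiv_lt_0_compat; lra. }
  replace (- delta * t) with (- (delta * t)) by ring. rewrite exp_Ropp.
  set (E := exp (delta * t)) in *. assert (HE : 0 < E) by apply exp_pos.
  replace (1 + delta / beta 0) with ((delta + beta 0) / beta 0) by (field; lra).
  replace (2 * / E) with (2 / E) by (unfold Rdiv; ring).
  apply frac_lt; try lra.
  assert (E * (delta + beta 0) < 2 * beta 0).
  { apply (Rmult_lt_compat_r (delta + beta 0)) in H2; [|lra].
    replace (2 * beta 0 / (delta + beta 0) * (delta + beta 0)) with (2 * beta 0) in H2 by (field; lra).
    exact H2. }
  lra.
Qed.

Definition yfun (delta t : R) := delta / (2 * exp (- delta * t) - 1).

Lemma ybound delta (beta : R -> R) t : 0 < delta -> delta < beta 0 -> t < taubar delta beta ->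
  0 < yfun delta t < beta 0.
Proof.
  intros Hd Hb Ht. assert (H := xbound delta beta t Hd Hb Ht).
  assert (0 < delta / beta 0) by (apply Rdiv_lt_0_compat; lra).
  unfold yfun. split.
  - apply Rdiv_lt_0_compat; lra.
  - replace (beta 0) with (delta / (delta / beta 0)) by (field; lra).
    apply frac_lt; try lra. nra.
Qed.

Lemma yfun_C1 delta : C1e (yfun delta) (fun t => 2 * exp (- delta * t) - 1 <> 0).
Proof.
  unfold yfun. apply E_div; [apply E_const| |auto].
  apply E_minus; [|apply E_const]. apply E_mult; [apply E_const|].
  apply E_exp. apply E_mult; [apply E_const| apply E_id].
Qed.
Theorem proposition5p1
  (delta : R) (beta beta1 beta2 binv : R -> R)
  (* beta is C^2 (beta1 = beta', beta2 = beta'') *)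
  (Hb1 : forall s, derivable_pt_lim beta s (beta1 s))
  (Hb2 : forall s, derivable_pt_lim beta1 s (beta2 s))
  (Hb2c : forall s, continuity_pt beta2 s)
  (Hpos : forall s, 0 <= s -> 0 < beta s)
  (Hdec : forall s t, 0 <= s -> s < t -> beta t < beta s)
  (Hder : forall s, 0 < s -> beta1 s < 0)
  (Hlim : forall eps, 0 < eps -> exists M, forall S, M < S -> Rabs (beta S) < eps)
  (Hdelta : 0 < delta) (Hdb : delta < beta 0)
  (* binv is the inverse of beta on (0, beta 0] *)
  (Hinv : forall y, 0 < y <= beta 0 -> 0 <= binv y /\ beta (binv y) = y)
  (tau_c omega Ad Bd : R)
  (Htau : 0 < tau_c < taubar delta beta)
  (HAd : derivable_pt_lim (Afun delta beta binv) tau_c Ad)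
  (HBd : derivable_pt_lim (Bfun delta beta beta1 binv) tau_c Bd)
  (Homega : 0 < omega)
  (Hroot_p : is_root (Afun delta beta binv tau_c)
                     (Bfun delta beta beta1 binv tau_c) tau_c 0 omega)
  (Hroot_m : is_root (Afun delta beta binv tau_c)
                     (Bfun delta beta beta1 binv tau_c) tau_c 0 (- omega)) :
  let A := Afun delta beta binv in
  let B := Bfun delta beta beta1 binv in
  let a := A tau_c in
  let b := B tau_c in
  (* +- i omega are simple roots *)
  is_simple_root a b tau_c 0 omega /\
  is_simple_root a b tau_c 0 (- omega) /\
  (* there is a C^1 branch of roots lambda(tau) = lr tau + i li tau through i omega *)
  (exists eps lr li lr' li', 0 < eps /\
     lr tau_c = 0 /\ li tau_c = omega /\
     (forall t, Rabs (t - tau_c) < eps ->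
        is_root (A t) (B t) t (lr t) (li t) /\
        derivable_pt_lim lr t (lr' t) /\ derivable_pt_lim li t (li' t) /\
        continuity_pt lr' t /\ continuity_pt li' t)) /\
  (* for any branch of roots through i omega differentiable at tau_c,
     the sign of d Re lambda / d tau at tau_c is the given one *)
  (forall eps lr li dr di, 0 < eps ->
     lr tau_c = 0 -> li tau_c = omega ->
     (forall t, Rabs (t - tau_c) < eps -> is_root (A t) (B t) t (lr t) (li t)) ->
     derivable_pt_lim lr tau_c dr -> derivable_pt_lim li tau_c di ->
     sgn dr = sgn (- b ^ 3 - b ^ 2 * Bd * tau_c
                   + b * (a ^ 2 + Ad + a * Ad * tau_c) - Bd * a)).
Proof.
  intros A B a b.
  assert (Hb0 : 0 < beta 0) by lra.
  set (y0 := yfun delta tau_c).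
  destruct (ybound delta beta tau_c Hdelta Hdb (proj2 Htau)) as [Hy0a Hy0b].
  fold y0 in Hy0a, Hy0b.
  destruct (Hinv y0 (conj Hy0a (Rlt_le _ _ Hy0b))) as [Hs0a Hs0b].
  set (s0 := binv y0) in *.
  assert (Hs0 : 0 < s0).
  { destruct Hs0a as [H|H]; auto. rewrite <- H in Hs0b. lra. }
  assert (HX := xbound delta beta tau_c Hdelta Hdb (proj2 Htau)).
  set (X := exp (- delta * tau_c)) in *.
  assert (HXe : exp (delta * tau_c) * X = 1).
  { unfold X. rewrite <- exp_plus. replace (delta * tau_c + - delta * tau_c) with 0 by ring. apply exp_0. }
  assert (Hdb0 : 0 < delta / beta 0) by (apply Rdiv_lt_0_compat; lra).
  assert (Hy0X : y0 * (2 * X - 1) = delta) by (unfold y0, yfun; fold X; field; lra).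
  assert (Ha : a = delta + y0).
  { unfold a, A, Afun. change (Sstar delta binv tau_c) with s0. rewrite Hs0b. reflexivity. }
  assert (Hbe : b = (2 * y0 + (2 * X - 1) * exp (delta * tau_c) * s0 * beta1 s0) * X).
  { unfold b, B, Bfun, Nstar. change (Sstar delta binv tau_c) with s0. rewrite Hs0b. reflexivity. }
  assert (Hba : b < a).
  { assert (Hd1 := Hder s0 Hs0).
    assert (E : b = a + (2 * X - 1) * s0 * beta1 s0).
    { rewrite Hbe, Ha. rewrite <- Hy0X at 2.
      replace ((2 * y0 + (2 * X - 1) * exp (delta * tau_c) * s0 * beta1 s0) * X)
        with (2 * y0 * X + (2 * X - 1) * (exp (delta * tau_c) * X) * s0 * beta1 s0) by ring.
      rewrite HXe. ring. }
    assert (0 < (2 * X - 1) * s0) by (apply Rmult_lt_0_compat; lra).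
    rewrite E. assert (0 < (2 * X - 1) * s0 * - beta1 s0) by (apply Rmult_lt_0_compat; lra). lra. }
  assert (Hapos : 0 < a) by lra.
  destruct Hroot_p as [R1 R2]. unfold DeltaRe, DeltaIm in R1, R2.
  replace (- 0 * tau_c) with 0 in R1, R2 by ring. rewrite exp_0 in R1, R2.
  change (Afun delta beta binv tau_c) with a in R1, R2.
  change (Bfun delta beta beta1 binv tau_c) with b in R1, R2.
  set (q0 := omega * tau_c) in *.
  assert (HC : b * cos q0 = a) by lra. assert (HS : b * sin q0 = - omega) by lra.
  assert (Hab : a * a + omega * omega = b * b).
  { assert (HCS : cos q0 * cos q0 + sin q0 * sin q0 = 1) by (rewrite <- (sin2_cos2 q0); unfold Rsqr; ring).
    assert (Hq : b * cos q0 * (b * cos q0) + b * sin q0 * (b * sin q0) = b * b)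
      by (replace (b*b) with (b*b*(cos q0 * cos q0 + sin q0 * sin q0)) by (rewrite HCS; ring); ring).
    rewrite HC, HS in Hq. nra. }
  assert (Hbneg : b < 0).
  { destruct (Rlt_or_le b 0) as [H|H]; auto. exfalso.
    assert (0 < omega * omega) by nra. nra. }
  split; [|split; [|split]].
  -
    split; [split; unfold DeltaRe, DeltaIm; replace (- 0 * tau_c) with 0 by ring; rewrite exp_0; fold q0; lra|].
    right. unfold dDeltaIm. replace (- 0 * tau_c) with 0 by ring. rewrite exp_0. fold q0.
    replace (- (b * tau_c * 1 * sin q0)) with (- (tau_c * (b * sin q0))) by ring. rewrite HS.
    assert (0 < tau_c * omega) by (apply Rmult_lt_0_compat; lra). lra.
  -
    split; [exact Hroot_m|].
    destruct Hroot_m as [_ R3]. unfold DeltaIm in R3.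
    change (Bfun delta beta beta1 binv tau_c) with b in R3.
    right. unfold dDeltaIm in *. replace (- 0 * tau_c) with 0 in * by ring. rewrite exp_0 in *.
    replace (- (b * tau_c * 1 * sin (- omega * tau_c))) with (- (tau_c * (b * 1 * sin (- omega * tau_c)))) by ring.
    replace (b * 1 * sin (- omega * tau_c)) with omega by lra.
    assert (0 < tau_c * omega) by (apply Rmult_lt_0_compat; lra). lra.
  -
    set (lb := s0 / 2). set (ub := s0 + 1).
    assert (Hbub : 0 < beta ub) by (apply Hpos; unfold ub; lra).
    assert (Hblb : beta lb < beta 0) by (apply Hdec; unfold lb; lra).
    assert (Hbinv : C1e binv (fun y => beta ub < y < beta lb)).
    { exists (fun y => / beta1 (binv y)). apply (inv_C1 beta beta1 binv lb ub).
      - unfold lb, ub; lra.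
      - intros x Hx. split; [apply Hb1|split; [apply (dpl_cont _ _ _ (Hb2 x))| apply Hder; unfold lb in Hx; lra]].
      - intros y Hy.
        destruct (Hinv y ltac:(lra)) as [H1 H2]. split; [split|exact H2].
        + destruct (Rlt_or_le (binv y) lb) as [H|H]; auto.
          assert (beta lb < beta (binv y)) by (apply Hdec; auto). lra.
        + destruct (Rlt_or_le ub (binv y)) as [H|H]; auto.
          assert (beta (binv y) < beta ub) by (apply Hdec; auto; unfold ub; lra). lra. }
    set (DB := fun t => 0 < t < taubar delta beta /\ beta ub < yfun delta t < beta lb).
    assert (HyDB : C1e (yfun delta) DB).
    { apply (E_sub _ _ _ (yfun_C1 delta)). intros t [[Ht1 Ht2] _].
      assert (Hx := xbound delta beta t Hdelta Hdb Ht2). lra. }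
    assert (HSe : C1e (fun t => binv (yfun delta t)) DB).
    { apply (E_comp (yfun delta) binv DB (fun y => beta ub < y < beta lb)); auto.
      intros t [_ H]; exact H. }
    assert (Hbeta : C1e beta (fun _ => True)).
    { exists beta1; intros t _; split; [apply Hb1| apply (dpl_cont _ _ _ (Hb2 t))]. }
    assert (Hbeta1 : C1e beta1 (fun _ => True)).
    { exists beta2; intros t _; split; [apply Hb2| apply Hb2c]. }
    assert (HAe : C1e A DB).
    { change (C1e (fun t => delta + beta (binv (yfun delta t))) DB).
      apply E_plus; [apply E_const|]. apply (E_comp _ beta DB (fun _ => True)); auto. }
    assert (HBe : C1e B DB).
    { change (C1e (fun t => (2 * beta (binv (yfun delta t)) + (2 * exp (- delta * t) - 1) * exp (delta * t) * binv (yfun delta t) * beta1 (binv (yfun delta t))) * exp (- delta * t)) DB).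
      apply E_mult.
      - apply E_plus.
        + apply E_mult; [apply E_const|]. apply (E_comp _ beta DB (fun _ => True)); auto.
        + apply E_mult; [|apply (E_comp _ beta1 DB (fun _ => True)); auto].
          apply E_mult; [apply E_mult|exact HSe].
          * apply E_minus; [|apply E_const]. apply E_mult; [apply E_const|].
            apply E_exp. apply E_mult; [apply E_const| apply E_id].
          * apply E_exp. apply E_mult; [apply E_const| apply E_id].
      - apply E_exp. apply E_mult; [apply E_const| apply E_id]. }
    set (cf := fun t => B t * t * exp (A t * t)).
    assert (Hce : C1e cf DB).
    { unfold cf. apply E_mult; [apply E_mult; [exact HBe| apply E_id]|].
      apply E_exp. apply E_mult; [exact HAe| apply E_id]. }
    assert (Hsq0 : 0 < sin q0).
    { assert (0 < - b * sin q0) by lra. nra. }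
    assert (Hq0 : 0 < q0) by (unfold q0; apply Rmult_lt_0_compat; lra).
    assert (Hsinc : continuity_pt sin q0) by (apply (dpl_cont _ _ _ (derivable_pt_lim_sin q0))).
    destruct (proj1 (cont_iff sin q0) Hsinc (sin q0) Hsq0) as [r' [Hr' Hsr]].
    set (r := Rmin (r' / 2) (q0 / 2)).
    assert (Hr : 0 < r) by (apply Rmin_pos; lra).
    assert (Hr1 : r <= r' / 2) by apply Rmin_l.
    assert (Hr2 : r <= q0 / 2) by apply Rmin_r.
    set (lb' := q0 - r). set (ub' := q0 + r).
    assert (Hin : forall x, lb' <= x <= ub' -> 0 < x /\ 0 < sin x).
    { intros x Hx. unfold lb', ub' in Hx. split; [lra|].
      assert (Rabs (x - q0) < r') by (apply Rabs_def1; lra).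
      specialize (Hsr x H). apply Rabs_def2 in Hsr. lra. }
    destruct gf_C1 as [gf' [Hg1 Hg2]].
    assert (Hgd : forall x, lb' <= x <= ub' -> derivable_pt_lim gf x (gf' x) /\ continuity_pt gf' x /\ gf' x < 0).
    { intros x Hx. destruct (Hin x Hx) as [Hx1 Hx2].
      destruct (Hg1 x ltac:(lra)) as [H1 H2]. split; [exact H1|split; [exact H2|]].
      rewrite Hg2 by lra. apply gd_neg; auto. }
    assert (Hlu' : lb' < ub') by (unfold lb', ub'; lra).
    destruct (inv_exists gf lb' ub' Hlu') as [h Hh].
    { intros x Hx. destruct (Hgd x Hx) as [H _]. exact (dpl_cont _ _ _ H). }
    assert (Hhe : C1e h (fun y => gf ub' < y < gf lb')).
    { eexists. apply (inv_C1 gf gf' h lb' ub' Hlu' Hgd Hh). }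
    assert (Hgdec : forall x y, lb' <= x -> x < y -> y <= ub' -> gf y < gf x).
    { apply (strict_dec gf gf'). intros x Hx; destruct (Hgd x Hx) as [? [? ?]]; auto. }
    assert (Hpf0 : pf q0 = a * tau_c).
    { unfold pf. replace (cos q0) with (a / b) by (rewrite <- HC; field; lra).
      replace (sin q0) with (- omega / b) by (rewrite <- HS; field; lra).
      unfold q0. field. split; lra. }
    assert (Hgq0 : gf q0 = cf tau_c).
    { unfold gf, cf. rewrite Hpf0. change (B tau_c) with b. change (A tau_c) with a.
      replace (sin q0) with (- omega / b) by (rewrite <- HS; field; lra).
      unfold q0. field. split; lra. }
    assert (Hgq0b : gf ub' < gf q0 < gf lb').
    { split; apply Hgdec; unfold lb', ub'; lra. }
    assert (Hhq0 : h (cf tau_c) = q0).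
    { rewrite <- Hgq0 in *. destruct (Hh (gf q0) ltac:(lra)) as [H1 H2].
      destruct (Rtotal_order (h (gf q0)) q0) as [H|[H|H]]; auto.
      - assert (gf q0 < gf (h (gf q0))) by (apply Hgdec; unfold lb', ub' in *; lra). lra.
      - assert (gf (h (gf q0)) < gf q0) by (apply Hgdec; unfold lb', ub' in *; lra). lra. }
    assert (HtDB : DB tau_c).
    { split; [exact Htau|]. fold y0. rewrite <- Hs0b.
      split; apply Hdec; unfold lb, ub; lra. }
    assert (Hyc := E_cont _ _ _ HyDB HtDB).
    assert (Hcc := E_cont _ _ _ Hce HtDB).
    destruct (proj1 (cont_iff _ _) Hyc (Rmin (y0 - beta ub) (beta lb - y0))) as [d1 [Hd1 Hd1']].
    { apply Rmin_pos; destruct HtDB as [_ H]; fold y0 in H; lra. }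
    destruct (proj1 (cont_iff _ _) Hcc (Rmin (cf tau_c - gf ub') (gf lb' - cf tau_c))) as [d2 [Hd2 Hd2']].
    { apply Rmin_pos; rewrite <- Hgq0; lra. }
    set (eps := Rmin (Rmin d1 d2) (Rmin tau_c (taubar delta beta - tau_c))).
    assert (Heps : 0 < eps) by (unfold eps; repeat apply Rmin_pos; lra).
    set (Df := fun t => Rabs (t - tau_c) < eps).
    assert (HD : forall t, Df t -> DB t /\ gf ub' < cf t < gf lb').
    { intros t Ht. unfold Df, eps in Ht.
      assert (Ht1 : Rabs (t - tau_c) < d1) by (eapply Rlt_le_trans; [exact Ht|]; eapply Rle_trans; apply Rmin_l).
      assert (Ht2 : Rabs (t - tau_c) < d2) by (eapply Rlt_le_trans; [exact Ht|]; eapply Rle_trans; [apply Rmin_l|apply Rmin_r]).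
      assert (Ht3 : Rabs (t - tau_c) < tau_c) by (eapply Rlt_le_trans; [exact Ht|]; eapply Rle_trans; [apply Rmin_r|apply Rmin_l]).
      assert (Ht4 : Rabs (t - tau_c) < taubar delta beta - tau_c) by (eapply Rlt_le_trans; [exact Ht|]; eapply Rle_trans; [apply Rmin_r|apply Rmin_r]).
      specialize (Hd1' t Ht1). specialize (Hd2' t Ht2). fold y0 in Hd1'.
      assert (Hm1 := Rmin_l (y0 - beta ub) (beta lb - y0)).
      assert (Hm2 := Rmin_r (y0 - beta ub) (beta lb - y0)).
      assert (Hm3 := Rmin_l (cf tau_c - gf ub') (gf lb' - cf tau_c)).
      assert (Hm4 := Rmin_r (cf tau_c - gf ub') (gf lb' - cf tau_c)).
      apply Rabs_def2 in Hd1'. apply Rabs_def2 in Hd2'. apply Rabs_def2 in Ht3. apply Rabs_def2 in Ht4.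
      split; [split; split|split]; lra. }
    assert (Hqe : C1e (fun t => h (cf t)) Df).
    { apply (E_comp cf h Df (fun y => gf ub' < y < gf lb')); auto.
      - apply (E_sub _ _ _ Hce). intros t Ht; apply HD, Ht.
      - intros t Ht; apply HD, Ht. }
    assert (Hqin : forall t, Df t -> lb' <= h (cf t) <= ub' /\ gf (h (cf t)) = cf t).
    { intros t Ht. apply Hh. destruct (HD t Ht) as [_ H]. lra. }
    assert (Hpfe : C1e pf (fun q => sin q <> 0)).
    { unfold pf. apply E_div; auto.
      - apply E_mult; [apply E_opp, E_id| apply E_cos, E_id].
      - apply E_sin, E_id. }
    assert (Htpos : forall t, Df t -> 0 < t).
    { intros t Ht. destruct (HD t Ht) as [[[H _] _] _]. exact H. }
    assert (Hlre : C1e (fun t => pf (h (cf t)) / t - A t) Df).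
    { apply E_minus.
      - apply E_div; [| apply E_id| intros t Ht; specialize (Htpos t Ht); lra].
        apply (E_comp _ pf Df (fun q => sin q <> 0)); auto.
        intros t Ht. destruct (Hqin t Ht) as [H _]. destruct (Hin _ H). lra.
      - apply (E_sub _ _ _ HAe). intros t Ht; apply HD, Ht. }
    assert (Hlie : C1e (fun t => h (cf t) / t) Df).
    { apply E_div; auto; [apply E_id| intros t Ht; specialize (Htpos t Ht); lra]. }
    destruct Hlre as [lr' Hlr']. destruct Hlie as [li' Hli'].
    exists eps, (fun t => pf (h (cf t)) / t - A t), (fun t => h (cf t) / t), lr', li'.
    split; [exact Heps|]. split; [|split].
    + cbv beta. rewrite Hhq0, Hpf0. change (A tau_c) with a. field. lra.
    + cbv beta. rewrite Hhq0. unfold q0. field. lra.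
    + intros t Ht. fold (Df t) in Ht.
      destruct (Hlr' t Ht) as [H1 H2]. destruct (Hli' t Ht) as [H3 H4].
      split; [|repeat split; assumption].
      destruct (Hqin t Ht) as [Hq1 Hq2]. destruct (Hin _ Hq1) as [Hq3 Hq4].
      assert (Htp := Htpos t Ht).
      set (q := h (cf t)) in *.
      assert (Eq : q / t * t = q) by (field; lra).
      assert (Eexp : exp (- (pf q / t - A t) * t) = / exp (pf q) * exp (A t * t)).
      { rewrite <- exp_Ropp, <- exp_plus. f_equal. field. lra. }
      unfold cf, gf in Hq2.
      set (E := exp (pf q)) in *. set (Y := exp (A t * t)) in *.
      assert (HE : 0 < E) by apply exp_pos. assert (HY : 0 < Y) by apply exp_pos.
      assert (HBt : B t = (- q * E / sin q) / (t * Y)).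
      { rewrite Hq2. field. lra. }
      unfold is_root, DeltaRe, DeltaIm. rewrite Eexp, Eq, HBt. unfold pf.
      split; field; lra.
  - intros eps lr li dr di Heps Hlr Hli Hr Hdr Hdi.
    apply (sign_part A B tau_c omega Ad Bd eps lr li dr di); auto; lra.
Qed.
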